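(* A strongly connected tournament $G$ is triangle-connected if and only if $G$ has no nontrivial homogeneous set that contains (the vertex set of) a cyclic triangle.
   Context: A tournament is a finite, non-null, loopless directed graph in which for any two distinct vertices $u,v$ there is exactly one edge with both ends in $\{u,v\}$; write $u\to v$ for the edge from $u$ to $v$. A homogeneous set of $G$ is a set $X\subseteq V(G)$ such that each $v\in V(G)\setminus X$ either has $v\to x$ for all $x\in X$ or $x\to v$ for all $x\in X$; it is nontrivial if $1<|X|<|V(G)|$. $G$ is strongly connected if for any two vertices $u,v$ there are directed paths from $u$ to $v$ and from $v$ to $u$. Two cyclic triangles in $G$ are adjacent if they share exactly two vertices; cyclic triangles $C,C'$ are triangle-connected if there is a sequence $C_1,\dots,C_n$ ($n\ge1$) of cyclic triangles with $C_1=C$, $C_n=C'$, and $C_i$ adjacent to $C_{i+1}$ for all $i$. A tournament is triangle-connected if it is strongly connected and any two of its cyclic triangles are triangle-connected. *)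

(* Defs.v *)
(* A tournament on a finite vertex type T is given by its
   edge relation e : rel T, with (e u v) meaning u -> v. *)
From mathcomp Require Import all_boot.
Set Implicit Arguments. Unset Strict Implicit. Unset Printing Implicit Defensive.

Section Tournaments.
Variable T : finType.
Variable e : rel T.

Definition tournament : Prop :=
  (0 < #|T|) /\ (forall u, ~~ e u u) /\
  (forall u v, u != v -> (e u v (+) e v u)).

Definition strongly_connected : Prop := forall u v : T, connect e u v.

Definition homogeneous (X : {set T}) : Prop :=
  forall v, v \notin X ->
    (forall x, x \in X -> e v x) \/ (forall x, x \in X -> e x v).

Definition nontrivial (X : {set T}) : Prop := 1 < #|X| < #|T|.

Definition cyclic_triangle (C : {set T}) : bool :=
  [exists a, exists b, exists c,
     [&& C == [set a; b; c], e a b, e b c & e c a]].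

Definition tri_adj : rel {set T} :=
  fun C D => [&& cyclic_triangle C, cyclic_triangle D & #|C :&: D| == 2].

Definition triangle_connected : Prop :=
  strongly_connected /\
  (forall C D, cyclic_triangle C -> cyclic_triangle D -> connect tri_adj C D).

End Tournaments.

(* Main.v *)
Require Import Defs.
From mathcomp Require Import all_boot.
Set Implicit Arguments. Unset Strict Implicit. Unset Printing Implicit Defensive.


Lemma connect_ind_prop (T : finType) (r : rel T) (Q : T -> Prop) x y :
  (forall u w, r u w -> Q u -> Q w) -> Q x -> connect r x y -> Q y.
Proof.
move=> H Qx /connectP[p pth ->]; elim: p x pth Qx => //= w p IH x /andP[rxw pth] Qx.
exact: IH pth (H _ _ rxw Qx).
Qed.

Lemma t_neq (T : finType) (e : rel T) : tournament e -> forall u w, e u w -> u != w.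
Proof. by move=> [_ [lp _]] u w euw; apply/eqP=> E; move: euw; rewrite E (negbTE (lp w)). Qed.

Lemma t_asym (T : finType) (e : rel T) : tournament e -> forall u w, e u w -> ~~ e w u.
Proof.
move=> tr u w euw; have nuw := t_neq tr euw.
case: tr => [_ [_ x]]; move: (x u w nuw); rewrite euw /=; by [].
Qed.

Lemma t_tot (T : finType) (e : rel T) : tournament e -> forall u w, u != w -> ~~ e u w -> e w u.
Proof. by case=> [_ [_ x]] u w nuw; move: (x u w nuw); case: (e u w). Qed.

Lemma cycP (T : finType) (e : rel T) C : cyclic_triangle e C ->
  exists a b c, [/\ C = [set a; b; c], e a b, e b c & e c a].
Proof.
case/existsP=> a /existsP[b /existsP[c /and4P[/eqP-> ? ? ?]]]; by exists a, b, c.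
Qed.

Lemma cycI (T : finType) (e : rel T) a b c : e a b -> e b c -> e c a ->
  cyclic_triangle e [set a; b; c].
Proof. move=> h1 h2 h3; apply/existsP; exists a; apply/existsP; exists b; apply/existsP; exists c.
by rewrite eqxx h1 h2 h3. Qed.

Lemma rot3 (T : finType) (a b c : T) : [set a; b; c] = [set b; c; a].
Proof. by apply/setP=> z; rewrite !inE; case: (z == a); case: (z == b); case: (z == c). Qed.

Lemma card3 (T : finType) (e : rel T) : tournament e -> forall a b c,
  e a b -> e b c -> e c a -> #|[set a; b; c]| = 3.
Proof.
move=> tr a b c h1 h2 h3.
have -> : [set a; b; c] = c |: [set a; b] by rewrite setUC.
rewrite cardsU1 cards2 (t_neq tr h1) !inE negb_or (t_neq tr h3) eq_sym (t_neq tr h2).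
by [].
Qed.

Lemma cyc_card (T : finType) (e : rel T) : tournament e -> forall C,
  cyclic_triangle e C -> #|C| = 3.
Proof. move=> tr C /cycP[a [b [c [-> h1 h2 h3]]]]; exact (card3 tr h1 h2 h3). Qed.

Lemma tri_adj_sym (T : finType) (e : rel T) : symmetric (tri_adj e).
Proof. by move=> C D; rewrite /tri_adj setIC andbCA. Qed.

Lemma share2 (T : finType) (e : rel T) : tournament e -> forall F G u w,
  cyclic_triangle e F -> cyclic_triangle e G -> u \in F -> w \in F -> u \in G -> w \in G ->
  e u w -> connect (tri_adj e) F G.
Proof.
move=> tr F G u w cF cG uF wF uG wG euw.
have c2 : 2 <= #|F :&: G|.
  have <- : #|[set u; w]| = 2 by rewrite cards2 (t_neq tr euw).
  by apply: subset_leq_card; apply/subsetP=> z; rewrite !inE => /orP[]/eqP->; rewrite ?uF ?uG ?wF ?wG.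
have c3 : #|F :&: G| <= 3 by rewrite -(cyc_card tr cF); apply: subset_leq_card; apply: subsetIl.
have [E2|N2] := eqVneq #|F :&: G| 2.
  by apply: connect1; rewrite /tri_adj cF cG E2.
have E3 : #|F :&: G| = 3.
  by move: c2 c3 N2; case: #|F :&: G| => [|[|[|[|n]]]].
have /eqP FG : F == G.
  rewrite eqEcard (cyc_card tr cF) (cyc_card tr cG) leqnn andbT.
  have /eqP <- : F :&: G == F by rewrite eqEcard subsetIl E3 (cyc_card tr cF).
  exact: subsetIr.
by rewrite FG connect0.
Qed.

Lemma two_of_three (T : finType) (X : {set T}) a b c : 2 <= #|X :&: [set a; b; c]| ->
  [\/ (a \in X) && (b \in X), (b \in X) && (c \in X) | (c \in X) && (a \in X)].
Proof.
move=> H.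
have small : forall z, X :&: [set a; b; c] \subset [set z] -> False.
  by move=> z /subset_leq_card; rewrite cards1 => /(leq_trans H).
case Ha: (a \in X); case Hb: (b \in X); case Hc: (c \in X); rewrite ?orbT /=;
  try by [constructor 1 | constructor 2 | constructor 3].
all: exfalso; first [ apply: (small a); apply/subsetP=> z; rewrite !inE => /andP[zX /orP[/orP[/eqP E|/eqP E]|/eqP E]]; by move: zX; rewrite E ?Ha ?Hb ?Hc ?eqxx | apply: (small b); apply/subsetP=> z; rewrite !inE => /andP[zX /orP[/orP[/eqP E|/eqP E]|/eqP E]]; by move: zX; rewrite E ?Ha ?Hb ?Hc ?eqxx | apply: (small c); apply/subsetP=> z; rewrite !inE => /andP[zX /orP[/orP[/eqP E|/eqP E]|/eqP E]]; by move: zX; rewrite E ?Ha ?Hb ?Hc ?eqxx ].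
Qed.


Lemma in3 (T : finType) (X : {set T}) a b c : a \in X -> b \in X -> c \in X -> [set a; b; c] \subset X.
Proof. by move=> ha hb hc; apply/subsetP=> z; rewrite !inE => /orP[/orP[]|]/eqP->. Qed.

Lemma tri_closure (T : finType) (e : rel T) (K0 X : {set T})
  (step : forall a b c, connect (tri_adj e) K0 [set a; b; c] -> a \in X -> b \in X ->
     e a b -> e b c -> e c a -> c \in X) F F' :
  connect (tri_adj e) K0 F -> F \subset X -> connect (tri_adj e) F F' -> F' \subset X.
Proof.
move=> cKF FX cFF'.
suff [] : connect (tri_adj e) K0 F' /\ F' \subset X by [].
apply: (connect_ind_prop (Q := fun G => connect (tri_adj e) K0 G /\ G \subset X)) _ (conj cKF FX) cFF'.
move=> u w adj [cKu uX].
have cKw := connect_trans cKu (connect1 adj).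
split=> //.
case/and3P: adj => _ cw /eqP i2.
case/cycP: cw cKw i2 => a [b [c [-> h1 h2 h3]]] cKw i2.
have : 2 <= #|X :&: [set a; b; c]| by rewrite -i2; apply: subset_leq_card; exact: setSI.
case/two_of_three=> /andP[x1 x2].
- by apply: in3 => //; apply: (step a b c).
- have xa : a \in X by apply: (step b c a) => //; rewrite rot3 rot3.
  exact: in3.
- have xb : b \in X by apply: (step c a b) => //; rewrite rot3.
  exact: in3.
Qed.


Lemma closed_set (T : finType) (e : rel T) (S : {set T}) x y :
  (forall t u, t \in S -> e t u -> u \in S) -> x \in S -> connect e x y -> y \in S.
Proof. by move=> H xS; apply: (connect_ind_prop (Q := fun z => z \in S)) => // u w /H. Qed.

Lemma dir1 (T : finType) (e : rel T) : tournament e -> strongly_connected e ->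
  triangle_connected e -> forall X C, homogeneous e X -> nontrivial X ->
  cyclic_triangle e C -> C \subset X -> False.
Proof.
move=> tr sc [_ tc] X C hX /andP[ltX1 ltXT] cC CX.
have [x0 x0X] : exists x0, x0 \in X.
  have : X != set0 by rewrite -card_gt0; exact: ltnW.
  by case/set0Pn=> x hx; exists x.
have [v0 _ v0X] : exists2 v, v \in [set: T] & v \notin X.
  apply/subsetPn; apply/negP=> /subset_leq_card; rewrite cardsT.
  by rewrite leqNgt ltXT.
have allin : forall a, a \notin X -> e a x0 -> forall x, x \in X -> e a x.
  move=> a aX ea x xX; case: (hX a aX) => H; first exact: H.
  by have := t_asym tr (H x0 x0X); rewrite ea.
have allout : forall a, a \notin X -> ~~ e a x0 -> forall x, x \in X -> e x a.
  move=> a aX ea x xX; case: (hX a aX) => H; last exact: H.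
  by have := H x0 x0X; rewrite (negbTE ea).
case: (boolP [exists b, exists a, [&& b \notin X, a \notin X, ~~ e b x0, e a x0 & e b a]]).
  case/existsP=> b /existsP[a /and5P[bX aX nb ea eba]].
  have cD : cyclic_triangle e [set b; a; x0] by apply: cycI => //; exact: allout.
  have sub : [set b; a; x0] \subset X.
    apply: (tri_closure (K0 := C) (X := X)) _ (connect0 _ C) CX (tc _ _ cC cD).
    move=> p q c _ pX qX epq eqc ecp; case: (boolP (c \in X)) => // cn.
    case: (hX c cn) => H.
      by have := t_asym tr eqc; rewrite H.
    by have := t_asym tr ecp; rewrite H.
  by move: aX; rewrite (subsetP sub) // !inE eqxx orbT.
move=> none.
have none' : forall b a, b \notin X -> a \notin X -> ~~ e b x0 -> e a x0 -> ~~ e b a.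
  move=> b a bX aX nb ea; apply/negP=> eba; move/negP: none; apply; apply/existsP; exists b.
  by apply/existsP; exists a; rewrite bX aX nb ea eba.
case: (boolP [exists a, (a \notin X) && e a x0]).
  case/existsP=> a /andP[aX ea].
  have : a \in [set t | (t \in X) || ~~ e t x0].
    apply: (closed_set (e := e)) (sc x0 a); last by rewrite inE x0X.
    move=> t u; rewrite !inE; case: (boolP (u \in X)) => //= un tS etu.
    apply/negP=> eu; case: (boolP (t \in X)) => tX.
      by have := t_asym tr (allin u un eu t tX); rewrite etu.
    by rewrite (negbTE tX) /= in tS; have := none' t u tX un tS eu; rewrite etu.
  by rewrite inE (negbTE aX) ea.
move=> nA.
have : x0 \in [set t | t \notin X].
  apply: (closed_set (e := e)) (sc v0 x0); last by rewrite inE.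
  move=> t u; rewrite !inE => tX etu; apply/negP=> uX.
  have nt : ~~ e t x0 by apply/negP=> et; move/negP: nA; apply; apply/existsP; exists t; rewrite tX et.
  by have := t_asym tr (allout t tX nt u uX); rewrite etu.
by rewrite inE x0X.
Qed.


Lemma conn_cyc (T : finType) (e : rel T) C F : cyclic_triangle e C ->
  connect (tri_adj e) C F -> cyclic_triangle e F.
Proof. move=> cC; apply: (connect_ind_prop (Q := cyclic_triangle e)) => // u w; by case/and3P. Qed.

Definition compU (T : finType) (e : rel T) (C : {set T}) : {set T} :=
  [set x | [exists F, connect (tri_adj e) C F && (x \in F)]].

Lemma compU_in (T : finType) (e : rel T) C F x :
  connect (tri_adj e) C F -> x \in F -> x \in compU e C.
Proof. by move=> cF xF; rewrite inE; apply/existsP; exists F; rewrite cF xF. Qed.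

Lemma comp_hom (T : finType) (e : rel T) : tournament e -> forall C,
  cyclic_triangle e C -> homogeneous e (compU e C).
Proof.
move=> tr C cC v vU.
have mixed : forall F p q, connect (tri_adj e) C F -> p \in F -> q \in F ->
    e v p -> e p q -> e q v -> False.
  move=> F p q cF pF qF evp epq eqv.
  have cG : cyclic_triangle e [set v; p; q] by exact: cycI.
  have cFG : connect (tri_adj e) F [set v; p; q].
    by apply: (share2 tr (conn_cyc cC cF) cG pF qF _ _ epq); rewrite !inE eqxx ?orbT.
  by move: vU; rewrite (compU_in (connect_trans cF cFG)) // !inE eqxx.
have neqv : forall t, t \in compU e C -> t != v.
  by move=> t tU; apply/eqP=> E; move: vU; rewrite -E tU.
have tot : forall t, t \in compU e C -> ~~ e v t -> e t v.
  move=> t tU nt; have h : v != t by rewrite eq_sym neqv.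
  exact (t_tot tr h nt).
have CU : forall t, t \in C -> t \in compU e C by move=> t; apply: compU_in; exact: connect0.
pose Xo := [set t | e v t]; pose Xi := [set t | e t v].
have stepo : forall a b c, connect (tri_adj e) C [set a; b; c] -> a \in Xo -> b \in Xo ->
    e a b -> e b c -> e c a -> c \in Xo.
  move=> a b c cF; rewrite !inE => _ evb _ ebc _; case: (boolP (e v c)) => // nvc; exfalso.
  apply: (mixed _ b c cF) => //; rewrite ?inE ?eqxx ?orbT //.
  by apply: tot nvc; apply: (compU_in cF); rewrite !inE eqxx ?orbT.
have stepi : forall a b c, connect (tri_adj e) C [set a; b; c] -> a \in Xi -> b \in Xi ->
    e a b -> e b c -> e c a -> c \in Xi.
  move=> a b c cF; rewrite !inE => eav _ _ _ eca; case: (boolP (e c v)) => // ncv; exfalso.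
  have evc : e v c.
    have h : c != v by apply: neqv; apply: (compU_in cF); rewrite !inE eqxx ?orbT.
    exact (t_tot tr h ncv).
  by apply: (mixed _ c a cF) => //; rewrite !inE eqxx ?orbT.
have [CXo|CXi] : C \subset Xo \/ C \subset Xi.
  case/cycP: (cC) => a [b [c [EC h1 h2 h3]]].
  have aC : a \in C by rewrite EC !inE eqxx.
  have bC : b \in C by rewrite EC !inE eqxx ?orbT.
  have cC' : c \in C by rewrite EC !inE eqxx ?orbT.
  have c0 := connect0 (tri_adj e) C.
  case ea: (e v a); case eb: (e v b); case ec: (e v c).
  - by left; rewrite EC; apply: in3; rewrite inE.
  - by exfalso; apply: (mixed C b c c0) => //; apply: tot; rewrite ?ec ?CU.
  - by exfalso; apply: (mixed C a b c0) => //; apply: tot; rewrite ?eb ?CU.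
  - by exfalso; apply: (mixed C a b c0) => //; apply: tot; rewrite ?eb ?CU.
  - by exfalso; apply: (mixed C c a c0) => //; apply: tot; rewrite ?ea ?CU.
  - by exfalso; apply: (mixed C b c c0) => //; apply: tot; rewrite ?ec ?CU.
  - by exfalso; apply: (mixed C c a c0) => //; apply: tot; rewrite ?ea ?CU.
  - right; rewrite EC; apply: in3; rewrite inE; apply: tot; by rewrite ?ea ?eb ?ec ?CU.
- left=> x; rewrite inE => /existsP[F /andP[cF xF]].
  have := tri_closure stepo (connect0 _ C) CXo cF.
  by move/subsetP/(_ x xF); rewrite inE.
- right=> x; rewrite inE => /existsP[F /andP[cF xF]].
  have := tri_closure stepi (connect0 _ C) CXi cF.
  by move/subsetP/(_ x xF); rewrite inE.
Qed.

Lemma comp_full (T : finType) (e : rel T) : tournament e ->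
  ~ (exists X : {set T}, homogeneous e X /\ nontrivial X /\
        exists C : {set T}, cyclic_triangle e C /\ C \subset X) ->
  forall C, cyclic_triangle e C -> forall x, exists F, connect (tri_adj e) C F /\ x \in F.
Proof.
move=> tr H C cC x.
have CU : C \subset compU e C by apply/subsetP=> t; apply: compU_in; exact: connect0.
case: (eqVneq (compU e C) setT) => [E|N].
  have : x \in compU e C by rewrite E inE.
  by rewrite inE => /existsP[F /andP[cF xF]]; exists F.
exfalso; apply: H; exists (compU e C); split; first exact: comp_hom.
split; last by exists C.
apply/andP; split.
  by apply: leq_trans (subset_leq_card CU); rewrite (cyc_card tr cC).
by rewrite -cardsT; apply: proper_card; rewrite properT.
Qed.


Lemma chain (T : finType) (e : rel T) : tournament e -> forall (K0 : {set T}) r s p,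
  e r s -> e s p -> e p r -> ~~ connect (tri_adj e) K0 [set r; s; p] ->
  (forall x, exists F, connect (tri_adj e) K0 F /\ x \in F) ->
  forall F, connect (tri_adj e) K0 F -> F \subset [set t | e t s && e p t] -> False.
Proof.
move=> tr K0 r s p ers esp epr nK full F cKF FX.
have csym := sym_connect_sym (tri_adj_sym e).
have cG0 : cyclic_triangle e [set r; s; p] by exact: cycI.
have hasG0 : forall q, e q s -> e p q -> connect (tri_adj e) [set q; s; p] [set r; s; p].
  move=> q eqs epq; apply: (share2 tr (cycI eqs esp epq) cG0 (u := s) (w := p)) => //;
  by rewrite !inE eqxx ?orbT.
have link : forall H H', connect (tri_adj e) K0 H -> connect (tri_adj e) H H' ->
    connect (tri_adj e) H' [set r; s; p] -> False.
  by move=> H H' c1 c2 c3; move/negP: nK; apply; apply: connect_trans c3; apply: connect_trans c2.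
have [F' [cKF' sF']] := full s.
have cFF' : connect (tri_adj e) F F' by apply: connect_trans cKF'; rewrite csym.
suff : F' \subset [set t | e t s && e p t].
  move/subsetP/(_ s sF'); rewrite inE => /andP[ess _].
  by have := t_neq tr ess; rewrite eqxx.
apply: (tri_closure (K0 := K0)) cKF FX cFF'.
move=> a b c cabc; rewrite !inE => /andP[eas epa] /andP[ebs epb] eab ebc eca.
have cabc' := cycI eab ebc eca.
apply/andP; split.
  case: (boolP (e c s)) => // ncs; exfalso.
  have ncs' : c != s by apply/eqP=> E; have := t_asym tr eas; rewrite -E eca.
  have esc := t_tot tr ncs' ncs.
  pose H := [set c; a; s]; pose H' := [set a; s; p].
  have cH : cyclic_triangle e H by exact: cycI.
  have cH' : cyclic_triangle e H' by exact: cycI.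
  apply: (link H H').
  - apply: connect_trans cabc _; apply: (share2 tr cabc' cH (u := c) (w := a)) => //; by rewrite !inE eqxx ?orbT.
  - apply: (share2 tr cH cH' (u := a) (w := s)) => //; by rewrite !inE eqxx ?orbT.
  - exact: hasG0.
case: (boolP (e p c)) => // npc; exfalso.
have npc' : p != c by apply/eqP=> E; have := t_asym tr epb; rewrite E ebc.
have ecp := t_tot tr npc' npc.
pose H := [set b; c; p]; pose H' := [set b; s; p].
have cH : cyclic_triangle e H by exact: cycI.
have cH' : cyclic_triangle e H' by exact: cycI.
apply: (link H H').
- apply: connect_trans cabc _; apply: (share2 tr cabc' cH (u := b) (w := c)) => //; by rewrite !inE eqxx ?orbT.
- apply: (share2 tr cH cH' (u := p) (w := b)) => //; by rewrite !inE eqxx ?orbT.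
- exact: hasG0.
Qed.

Lemma rot_to3 (T : finType) (e : rel T) a b c v : v \in [set a; b; c] ->
  e a b -> e b c -> e c a ->
  exists x y, [/\ [set a; b; c] = [set v; x; y], e v x, e x y & e y v].
Proof.
rewrite !inE => /orP[/orP[]|]/eqP-> h1 h2 h3.
- by exists b, c.
- by exists c, a; rewrite rot3.
- by exists a, b; rewrite rot3 rot3.
Qed.


Lemma two_full (T : finType) (e : rel T) : tournament e -> forall C D,
  cyclic_triangle e C -> cyclic_triangle e D ->
  (forall x, exists F, connect (tri_adj e) C F /\ x \in F) ->
  (forall x, exists F, connect (tri_adj e) D F /\ x \in F) ->
  connect (tri_adj e) C D.
Proof.
move=> tr C D cC cD fC fD.
case: (boolP (connect (tri_adj e) C D)) => // nCD; exfalso.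
have csym := sym_connect_sym (tri_adj_sym e).
case/cycP: (cD) => v [s [p [ED evs esp epv]]].
have [F [cCF vF]] := fC v.
have cF := conn_cyc cC cCF.
case/cycP: (cF) vF cCF => a [b [c [EF h1 h2 h3]]] vF cCF.
rewrite EF in vF cCF.
have [x [y [EF' evx exy eyv]]] := rot_to3 vF h1 h2 h3.
rewrite EF' in cCF.
have cT := cycI evx exy eyv.
have link : forall H, connect (tri_adj e) C H -> connect (tri_adj e) H D -> False.
  by move=> H c1 c2; move/negP: nCD; apply; apply: connect_trans c2.
have sh : forall G H u w, cyclic_triangle e G -> cyclic_triangle e H ->
    u \in G -> w \in G -> u \in H -> w \in H -> e u w -> connect (tri_adj e) G H.
  by move=> G H u w; apply: share2.
have vT : v \in [set v; x; y] by rewrite !inE eqxx.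
have xT : x \in [set v; x; y] by rewrite !inE eqxx ?orbT.
have yT : y \in [set v; x; y] by rewrite !inE eqxx ?orbT.
have vD : v \in D by rewrite ED !inE eqxx.
have sD : s \in D by rewrite ED !inE eqxx ?orbT.
have pD : p \in D by rewrite ED !inE eqxx ?orbT.
have TD : ~ connect (tri_adj e) [set v; x; y] D.
  by move=> cc; apply: (link _ cCF cc).
have ys : e y s.
  case: (boolP (e y s)) => // nys; exfalso.
  have nys' : y != s by apply/eqP=> E; apply: TD; apply: (sh _ _ y v) => //; rewrite ?E.
  have esy := t_tot tr nys' nys.
  have cH := cycI eyv evs esy.
  apply: (link [set y; v; s]).
    by apply: connect_trans cCF _; apply: (sh _ _ y v) => //; rewrite !inE eqxx ?orbT.
  by apply: (sh _ _ v s) => //; rewrite !inE eqxx ?orbT.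
have px : e p x.
  case: (boolP (e p x)) => // npx; exfalso.
  have npx' : p != x by apply/eqP=> E; apply: TD; apply: (sh _ _ v x) => //; rewrite -?E.
  have exp := t_tot tr npx' npx.
  have cH := cycI evx exp epv.
  apply: (link [set v; x; p]).
    by apply: connect_trans cCF _; apply: (sh _ _ v x) => //; rewrite !inE eqxx ?orbT.
  by rewrite csym; apply: (sh _ _ p v) => //; rewrite !inE eqxx ?orbT.
case: (boolP (e x s)) => xs; case: (boolP (e p y)) => py.
-
  have nC : ~~ connect (tri_adj e) C [set v; s; p] by rewrite -ED.
  have sub : [set v; x; y] \subset [set t | e t s && e p t].
    by apply: in3; rewrite inE ?evs ?epv ?xs ?px ?ys ?py.
  exact: (chain tr evs esp epv nC fC cCF sub).
- have nyp : p != y by apply/eqP=> E; apply: TD; apply: (sh _ _ y v) => //; rewrite -?E.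
  have eyp := t_tot tr nyp py.
  have cH1 := cycI exy eyp px.
  have cH2 := cycI xs esp px.
  apply: (link [set x; s; p]).
    apply: connect_trans cCF _; apply: (connect_trans (y := [set x; y; p])).
      by apply: (sh _ _ x y) => //; rewrite !inE eqxx ?orbT.
    by apply: (sh _ _ p x) => //; rewrite !inE eqxx ?orbT.
  by rewrite csym; apply: (sh _ _ s p) => //; rewrite !inE eqxx ?orbT.
- have nxs : x != s by apply/eqP=> E; apply: TD; apply: (sh _ _ v x) => //; rewrite ?E.
  have esx := t_tot tr nxs xs.
  have cH1 := cycI exy ys esx.
  have cH2 := cycI ys esp py.
  apply: (link [set y; s; p]).
    apply: connect_trans cCF _; apply: (connect_trans (y := [set x; y; s])).
      by apply: (sh _ _ x y) => //; rewrite !inE eqxx ?orbT.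
    by apply: (sh _ _ y s) => //; rewrite !inE eqxx ?orbT.
  by rewrite csym; apply: (sh _ _ s p) => //; rewrite !inE eqxx ?orbT.
- have nxs : x != s by apply/eqP=> E; apply: TD; apply: (sh _ _ v x) => //; rewrite ?E.
  have esx := t_tot tr nxs xs.
  have nyp : p != y by apply/eqP=> E; apply: TD; apply: (sh _ _ y v) => //; rewrite -?E.
  have eyp := t_tot tr nyp py.
  have nD : ~~ connect (tri_adj e) D [set v; x; y] by apply/negP=> cc; apply: TD; rewrite csym.
  have sub : D \subset [set t | e t x && e y t].
    by rewrite ED; apply: in3; rewrite inE ?evx ?eyv ?esx ?ys ?px ?eyp.
  exact: (chain tr evx exy eyv nD fD (connect0 _ D) sub).
Qed.

Theorem corollary4p2 (T : finType) (e : rel T) :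
  tournament e -> strongly_connected e ->
  (triangle_connected e <->
   ~ (exists X : {set T}, homogeneous e X /\ nontrivial X /\
        exists C : {set T}, cyclic_triangle e C /\ C \subset X)).
Proof.
move=> tr sc; split.
- move=> tc [X [hX [ntX [C [cC CX]]]]].
  exact: (dir1 tr sc tc hX ntX cC CX).
- move=> H; split=> // C D cC cD.
  exact: (two_full tr cC cD (comp_full tr H cC) (comp_full tr H cD)).
Qed.
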